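(* Consider the homogeneous two-fluid model in $\mathbb{R}^d$: unknowns are the volume fractions $\alpha^\pm\in[0,1]$ with $\alpha^++\alpha^-=1$, the phase densities $\rho^\pm>0$, a common velocity field $\vec{u}$, a common pressure $p$ and the mixture specific internal energy $e$, satisfying \begin{align*} (\alpha^+\rho^+)_t + \nabla\cdot(\alpha^+\rho^+\vec{u}) &= 0,\\ (\alpha^-\rho^-)_t + \nabla\cdot(\alpha^-\rho^-\vec{u}) &= 0,\\ (\rho\vec{u})_t + \nabla\cdot(\rho\vec{u}\otimes\vec{u} + p\,\mathbb{I}) &= \rho\vec{g},\\ (\rho E)_t + \nabla\cdot(\rho H\vec{u}) &= \rho\vec{g}\cdot\vec{u}, \end{align*} where $\vec g$ is a constant gravity vector, $\rho=\alpha^+\rho^++\alpha^-\rho^-$, $E=e+\tfrac12|\vec u|^2$, $H=E+p/\rho$, and the system is closed by the mixture equation of state described in the context. Let $\alpha=\alpha^+-\alpha^-$, and let $s$ be the mixture specific entropy defined by $2\rho s=(1+\alpha)\rho^+s^++(1-\alpha)\rho^-s^-$. Then continuous solutions of this system satisfy \begin{align*} \vec{u}_t + \vec{u}\cdot\nabla\vec{u} + \frac{1}{\rho}\nabla p &= \vec{g},\\ p_t + \vec{u}\cdot\nabla p + \rho c_s^2\,\nabla\cdot\vec{u} &= 0,\\ \alpha_t + \vec{u}\cdot\nabla\alpha + (1-\alpha^2)\,\delta\,\nabla\cdot\vec{u} &= 0,\\ s_t + \vec{u}\cdot\nabla s &= 0, \end{align*} where $c_s$ and $\delta$ are defined as follows: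 with $(c_s^\pm)^2=\dfrac{\gamma^\pm p+\pi^\pm}{\rho^\pm}$ and $$\rho a^2=\frac{(1+\alpha)\rho^+(c_s^+)^2}{2(\gamma^+-1)}+\frac{(1-\alpha)\rho^-(c_s^-)^2}{2(\gamma^--1)},$$ $c_s>0$ is given by $$\frac{1}{\rho c_s^2}=\frac{(1+\alpha)\gamma^+}{2\rho^+(c_s^+)^2}+\frac{(1-\alpha)\gamma^-}{2\rho^-(c_s^-)^2}-\frac{1}{\rho a^2},$$ and $$\delta=\frac12\,\frac{\rho c_s^2(\gamma^-\pi^+-\gamma^+\pi^-)}{\rho^+\rho^-(c_s^+)^2(c_s^-)^2}.$$
   Context: Each pure fluid (superscript $+$ for liquid, $-$ for gas) obeys a stiffened-gas equation of state with constants $\gamma^\pm>1$, $C_V^\pm>0$, $\pi^\pm\ge 0$: $p^\pm+\pi^\pm=(\gamma^\pm-1)\rho^\pm e^\pm$ and $e^\pm=C_V^\pm T^\pm+\dfrac{\pi^\pm}{\gamma^\pm\rho^\pm}$, where $e^\pm,T^\pm$ are the specific internal energy and temperature of phase $\pm$. The mixture equation of state $p=\mathcal P(\alpha,\rho,e)$ is defined by requiring pressure and temperature equilibrium between the phases: given $\alpha\in[-1,1]$, $\rho>0$, $e>0$, one solves for $\rho^\pm,e^\pm$ the system $(1+\alpha)\rho^++(1-\alpha)\rho^-=2\rho$, $(1+\alpha)\rho^+e^++(1-\alpha)\rho^-e^-=2\rho e$, $p^+=p^-$, $T^+=T^-$, and sets $p=p^\pm$, $T=T^\pm$. Here $s^\pm$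 denotes the specific entropy of phase $\pm$ (a function of $(\rho^\pm,e^\pm)$ satisfying $T^\pm ds^\pm=de^\pm+p^\pm d(1/\rho^\pm)$). *)

(* Defs.v *)
From HB Require Import structures.
From mathcomp Require Import all_boot all_order all_algebra.
From mathcomp Require Import all_classical all_reals all_analysis.
Set Implicit Arguments. Unset Strict Implicit. Unset Printing Implicit Defensive.
Import Order.TTheory GRing.Theory Num.Theory.
Import numFieldNormedType.Exports.
Local Open Scope ring_scope.

Section TwoFluid.
Variables (R : realType) (d : nat).

Notation sfield := (R -> 'rV[R]_d -> R).

Definition ei (i : 'I_d) : 'rV[R]_d := delta_mx 0 i.

Definition dt (F : sfield) (t : R) (x : 'rV[R]_d) : R :=
  derive1 (fun tau : R => F tau x) t.

Definition dx (i : 'I_d) (F : sfield) (t : R) (x : 'rV[R]_d) : R :=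
  derive1 (fun h : R => F t (x + h *: ei i)) 0.

Definition partial_derivable (F : sfield) : Prop :=
  forall t x, derivable (fun tau : R => F tau x) t 1 /\
    forall i, derivable (fun h : R => F t (x + h *: ei i)) 0 1.

Definition divergence (u : 'I_d -> sfield) (t : R) (x : 'rV[R]_d) : R :=
  \sum_i dx i (u i) t x.

Definition advect (u : 'I_d -> sfield) (F : sfield) (t : R) (x : 'rV[R]_d) : R :=
  \sum_i u i t x * dx i F t x.

End TwoFluid.

(* Stiffened gas EOS of one phase: p + pi = (gamma-1) rho e,
   e = Cv T + pi/(gamma rho). *)
Definition sg_pressure {R : realType} (gam pi rho e : R) : R :=
  (gam - 1) * rho * e - pi.
Definition sg_temperature {R : realType} (gam Cv pi rho e : R) : R :=
  (e - pi / (gam * rho)) / Cv.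
(* specific entropy s = Cv ln(T rho^(1-gamma)) + s0 (s0 arbitrary constant);
   it satisfies T ds = de + p d(1/rho). *)
Definition sg_entropy {R : realType} (gam Cv pi s0 rho e : R) : R :=
  Cv * (ln (sg_temperature gam Cv pi rho e) - (gam - 1) * ln rho) + s0.

Definition sound2 {R : realType} (gam pi rho p : R) : R := (gam * p + pi) / rho.

Definition mix_rho_a2 {R : realType} (gp gm pip pim a rp rm p : R) : R :=
  (1 + a) * rp * sound2 gp pip rp p / (2 * (gp - 1))
  + (1 - a) * rm * sound2 gm pim rm p / (2 * (gm - 1)).

Definition mix_rho_cs2 {R : realType} (gp gm pip pim a rp rm p : R) : R :=
  ((1 + a) * gp / (2 * rp * sound2 gp pip rp p)
   + (1 - a) * gm / (2 * rm * sound2 gm pim rm p)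
   - 1 / mix_rho_a2 gp gm pip pim a rp rm p)^-1.

Definition mix_delta {R : realType} (gp gm pip pim a rp rm p : R) : R :=
  (1 / 2) * (mix_rho_cs2 gp gm pip pim a rp rm p * (gm * pip - gp * pim))
  / (rp * rm * sound2 gp pip rp p * sound2 gm pim rm p).

(* Main.v *)
Require Import Defs.
From HB Require Import structures.
From mathcomp Require Import all_boot all_order all_algebra.
From mathcomp Require Import all_classical all_reals all_analysis.
From mathcomp Require Import ring lra.
Import Order.TTheory GRing.Theory Num.Theory.
Import numFieldNormedType.Exports.
Local Open Scope ring_scope.
Set Implicit Arguments. Unset Strict Implicit.

Section D1.
Variable R : realType.
Implicit Types (f g : R -> R) (a df dg : R).
Definition ID f a df := is_derive a (1:R) f df.

Lemma ID_val f a df : ID f a df -> derive1 f a = df.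
Proof. by move=> H; rewrite derive1E; apply: derive_val. Qed.
Lemma ID_der f a df : ID f a df -> derivable f a 1.
Proof. by case. Qed.
Lemma ID_of f a : derivable f a 1 -> ID f a (derive1 f a).
Proof. by move=> H; rewrite derive1E; apply: derivableP. Qed.

Lemma IDM f g a df dg : ID f a df -> ID g a dg ->
  ID (fun h => f h * g h) a (f a * dg + g a * df).
Proof. move=> Hf Hg; have := is_deriveM Hf Hg. by []. Qed.
Lemma IDD f g a df dg : ID f a df -> ID g a dg ->
  ID (fun h => f h + g h) a (df + dg).
Proof. move=> Hf Hg; have := is_deriveD Hf Hg. by []. Qed.
Lemma IDN f a df : ID f a df -> ID (fun h => - f h) a (- df).
Proof. move=> Hf; have := is_deriveN Hf. by []. Qed.
Lemma IDC (c a : R) : ID (fun _ => c) a 0.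
Proof. exact: is_derive_cst. Qed.
Lemma IDV f a df : f a != 0 -> ID f a df -> ID (fun h => (f h)^-1) a (- df / (f a ^+ 2)).
Proof. move=> Hn Hf; have := is_deriveV Hn Hf. rewrite /ID.
 suff -> : - df / f a ^+ 2 = - f a ^- 2 *: df by []. by rewrite -[RHS]/(_ * _) mulNr mulrC mulNr. Qed.
Lemma IDln f a df : 0 < f a -> ID f a df -> ID (fun h => ln (f h)) a (df / f a).
Proof. move=> Hp Hf. have := is_derive1_comp (is_derive1_ln Hp) Hf.
 by rewrite mulrC. Qed.
Lemma IDS n (F : 'I_n -> R -> R) a dF : (forall i, ID (F i) a (dF i)) ->
  ID (fun h => \sum_(i < n) F i h) a (\sum_(i < n) dF i).
Proof.
move=> H; have := is_derive_sum H. 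
have -> : (\sum_(i < n) F i) = (fun h => \sum_(i < n) F i h).
  by apply/funext => h; rewrite fct_sumE.
by [].
Qed.
Lemma ID_ext f g a df : f = g -> ID f a df -> ID g a df.
Proof. by move=> ->. Qed.
End D1.

Section PD.
Variables (R : realType) (d : nat).
Notation sf := (R -> 'rV[R]_d -> R).
Implicit Types (F G : sf).

Lemma ei0 (x : 'rV[R]_d) i : x + 0 *: ei R i = x.
Proof. by rewrite scale0r addr0. Qed.

Lemma dtID F t x : partial_derivable F -> ID (fun tau => F tau x) t (dt F t x).
Proof. by move=> H; apply: ID_of; case: (H t x). Qed.
Lemma dxID F t x i : partial_derivable F -> ID (fun h => F t (x + h *: ei R i)) 0 (dx i F t x).
Proof. by move=> H; apply: ID_of; case: (H t x). Qed.


Lemma pdvM F G : partial_derivable F -> partial_derivable G ->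
  partial_derivable (fun t x => F t x * G t x).
Proof.
move=> HF HG t x; split.
  exact: (ID_der (IDM (dtID t x HF) (dtID t x HG))).
move=> i; exact: (ID_der (IDM (dxID t x i HF) (dxID t x i HG))).
Qed.
Lemma dtM F G t x : partial_derivable F -> partial_derivable G ->
  dt (fun t x => F t x * G t x) t x = F t x * dt G t x + G t x * dt F t x.
Proof. by move=> HF HG; apply: ID_val (IDM (dtID t x HF) (dtID t x HG)). Qed.
Lemma dxM F G t x i : partial_derivable F -> partial_derivable G ->
  dx i (fun t x => F t x * G t x) t x = F t x * dx i G t x + G t x * dx i F t x.
Proof. by move=> HF HG; rewrite /dx (ID_val (IDM (dxID t x i HF) (dxID t x i HG))) ei0. Qed.

Lemma pdv_ID F (dF : R -> 'rV[R]_d -> R) (dX : 'I_d -> R -> 'rV[R]_d -> R) (f : R -> R) :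
  (forall t x, ID (fun tau => F tau x) t (dF t x)) ->
  (forall t x i, ID (fun h => F t (x + h *: ei R i)) 0 (dX i t x)) ->
  partial_derivable F.
Proof. by move=> H1 H2 t x; split; [exact: ID_der (H1 t x)| move=> i; exact: ID_der (H2 t x i)]. Qed.

Lemma pdvD F G : partial_derivable F -> partial_derivable G ->
  partial_derivable (fun t x => F t x + G t x).
Proof.
move=> HF HG t x; split.
  exact: (ID_der (IDD (dtID t x HF) (dtID t x HG))).
move=> i; exact: (ID_der (IDD (dxID t x i HF) (dxID t x i HG))).
Qed.
Lemma dtD F G t x : partial_derivable F -> partial_derivable G ->
  dt (fun t x => F t x + G t x) t x = dt F t x + dt G t x.
Proof. by move=> HF HG; apply: ID_val (IDD (dtID t x HF) (dtID t x HG)). Qed.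
Lemma dxD F G t x i : partial_derivable F -> partial_derivable G ->
  dx i (fun t x => F t x + G t x) t x = dx i F t x + dx i G t x.
Proof. by move=> HF HG; rewrite /dx (ID_val (IDD (dxID t x i HF) (dxID t x i HG))). Qed.

Lemma pdvC (c : R) : partial_derivable (fun (_ : R) (_ : 'rV[R]_d) => c).
Proof. move=> t x; split; first exact: ID_der (IDC c t). move=> i; exact: ID_der (IDC c 0). Qed.
Lemma dtC (c : R) t x : dt (fun (_ : R) (_ : 'rV[R]_d) => c) t x = 0.
Proof. exact: ID_val (IDC c t). Qed.
Lemma dxC (c : R) t x i : dx i (fun (_ : R) (_ : 'rV[R]_d) => c) t x = 0.
Proof. exact: ID_val (IDC c 0). Qed.

Lemma pdvV F : (forall t x, F t x != 0) -> partial_derivable F ->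
  partial_derivable (fun t x => (F t x)^-1).
Proof.
move=> Hn HF t x; split.
  exact: (ID_der (IDV (Hn t x) (dtID t x HF))).
move=> i; apply: (ID_der (IDV _ (dxID t x i HF))); exact: Hn.
Qed.
Lemma dtV F t x : (forall t x, F t x != 0) -> partial_derivable F ->
  dt (fun t x => (F t x)^-1) t x = - dt F t x / (F t x ^+ 2).
Proof. by move=> Hn HF; apply: ID_val (IDV (Hn t x) (dtID t x HF)). Qed.
Lemma dxV F t x i : (forall t x, F t x != 0) -> partial_derivable F ->
  dx i (fun t x => (F t x)^-1) t x = - dx i F t x / (F t x ^+ 2).
Proof.
move=> Hn HF; have Hn0 : F t (x + 0 *: ei R i) != 0 by exact: Hn.
by rewrite /dx (ID_val (IDV Hn0 (dxID t x i HF))) ei0.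
Qed.

Lemma pdvln F : (forall t x, 0 < F t x) -> partial_derivable F ->
  partial_derivable (fun t x => ln (F t x)).
Proof.
move=> Hn HF t x; split.
  exact: (ID_der (IDln (Hn t x) (dtID t x HF))).
move=> i; apply: (ID_der (IDln _ (dxID t x i HF))); exact: Hn.
Qed.
Lemma dtln F t x : (forall t x, 0 < F t x) -> partial_derivable F ->
  dt (fun t x => ln (F t x)) t x = dt F t x / F t x.
Proof. by move=> Hn HF; apply: ID_val (IDln (Hn t x) (dtID t x HF)). Qed.
Lemma dxln F t x i : (forall t x, 0 < F t x) -> partial_derivable F ->
  dx i (fun t x => ln (F t x)) t x = dx i F t x / F t x.
Proof.
move=> Hn HF; have Hn0 : 0 < F t (x + 0 *: ei R i) by exact: Hn.
by rewrite /dx (ID_val (IDln Hn0 (dxID t x i HF))) ei0.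
Qed.

Lemma pdvS n (F : 'I_n -> sf) : (forall k, partial_derivable (F k)) ->
  partial_derivable (fun t x => \sum_(k < n) F k t x).
Proof.
move=> HF t x; split.
  exact: (ID_der (IDS (fun k => dtID t x (HF k)))).
move=> i; exact: (ID_der (IDS (fun k => dxID t x i (HF k)))).
Qed.
Lemma dtS n (F : 'I_n -> sf) t x : (forall k, partial_derivable (F k)) ->
  dt (fun t x => \sum_(k < n) F k t x) t x = \sum_(k < n) dt (F k) t x.
Proof. by move=> HF; apply: ID_val (IDS (fun k => dtID t x (HF k))). Qed.
Lemma dxS n (F : 'I_n -> sf) t x i : (forall k, partial_derivable (F k)) ->
  dx i (fun t x => \sum_(k < n) F k t x) t x = \sum_(k < n) dx i (F k) t x.
Proof. by move=> HF; rewrite /dx (ID_val (IDS (fun k => dxID t x i (HF k)))). Qed.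

Variable u : 'I_d -> sf.
Definition Dm F t x := dt F t x + advect u F t x.

Lemma Dm_lin1 F G (c : R) t x :
  dt F t x = c * dt G t x -> (forall i, dx i F t x = c * dx i G t x) ->
  Dm F t x = c * Dm G t x.
Proof.
move=> H1 H2; rewrite /Dm /advect H1 mulrDr mulr_sumr; congr (_ + _).
by apply: eq_bigr => i _; rewrite H2 mulrCA.
Qed.
Lemma Dm_lin2 F G1 G2 (c1 c2 : R) t x :
  dt F t x = c1 * dt G1 t x + c2 * dt G2 t x ->
  (forall i, dx i F t x = c1 * dx i G1 t x + c2 * dx i G2 t x) ->
  Dm F t x = c1 * Dm G1 t x + c2 * Dm G2 t x.
Proof.
move=> H1 H2; rewrite /Dm /advect H1.
rewrite (eq_bigr (fun i => c1 * (u i t x * dx i G1 t x) + c2 * (u i t x * dx i G2 t x))); last first.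
  by move=> i _; rewrite H2; ring.
by rewrite big_split /= -!mulr_sumr; ring.
Qed.

Lemma DmM F G t x : partial_derivable F -> partial_derivable G ->
  Dm (fun t x => F t x * G t x) t x = F t x * Dm G t x + G t x * Dm F t x.
Proof. by move=> HF HG; apply: Dm_lin2 => [|i]; [apply: dtM|apply: dxM]. Qed.
Lemma DmD F G t x : partial_derivable F -> partial_derivable G ->
  Dm (fun t x => F t x + G t x) t x = Dm F t x + Dm G t x.
Proof.
move=> HF HG; rewrite -[Dm F t x]mul1r -[Dm G t x]mul1r.
by apply: Dm_lin2 => [|i]; rewrite !mul1r; [apply: dtD|apply: dxD].
Qed.
Lemma DmC (c : R) t x : Dm (fun _ _ => c) t x = 0.
Proof. by rewrite /Dm /advect dtC big1 ?addr0 // => i _; rewrite dxC mulr0. Qed.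
Lemma DmV F t x : (forall t x, F t x != 0) -> partial_derivable F ->
  Dm (fun t x => (F t x)^-1) t x = - Dm F t x / (F t x ^+ 2).
Proof.
move=> Hn HF; rewrite mulNr -mulrN mulrC.
apply: Dm_lin1 => [|i]; [rewrite dtV // | rewrite dxV //]; by rewrite mulrC mulNr mulrN.
Qed.
Lemma Dmln F t x : (forall t x, 0 < F t x) -> partial_derivable F ->
  Dm (fun t x => ln (F t x)) t x = Dm F t x / F t x.
Proof.
move=> Hn HF; rewrite mulrC.
apply: Dm_lin1 => [|i]; [rewrite dtln // | rewrite dxln //]; by rewrite mulrC.
Qed.
Lemma DmS n (F : 'I_n -> sf) t x : (forall k, partial_derivable (F k)) ->
  Dm (fun t x => \sum_(k < n) F k t x) t x = \sum_(k < n) Dm (F k) t x.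
Proof.
move=> HF; rewrite /Dm /advect dtS // big_split /=; congr (_ + _).
rewrite (eq_bigr (fun i => \sum_k u i t x * dx i (F k) t x)); last first.
  by move=> i _; rewrite dxS // mulr_sumr.
by rewrite exchange_big.
Qed.

Lemma consE F t x : partial_derivable F -> (forall i, partial_derivable (u i)) ->
  dt F t x + \sum_i dx i (fun t x => F t x * u i t x) t x = Dm F t x + F t x * divergence u t x.
Proof.
move=> HF Hu; rewrite /Dm /advect /divergence.
rewrite (eq_bigr (fun i => u i t x * dx i F t x + F t x * dx i (u i) t x)); last first.
  by move=> i _; rewrite dxM // addrC.
by rewrite big_split /= -mulr_sumr addrA.
Qed.

Lemma dx_ite (j i : 'I_d) F (P : sf) t x : partial_derivable F -> partial_derivable P ->
  dx i (fun t x => F t x + (if i == j then P t x else 0)) t x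
  = dx i F t x + (if i == j then dx i P t x else 0).
Proof.
move=> HF HP; case: eqP => _; first by rewrite dxD.
have -> : (fun t x => F t x + 0) = F by apply/funext => a; apply/funext => b; rewrite addr0.
by rewrite addr0.
Qed.
End PD.
Section Alg.
Variable R : realType.
Variables (gp gm Cp Cm pp pm a b r1 r2 P DA D1 D2 DP th : R).
Hypotheses (hgp : 1 < gp) (hgm : 1 < gm) (hCp : 0 < Cp) (hCm : 0 < Cm)
  (ha : 0 <= a) (hb : 0 <= b) (hab : a + b = 1) (hr1 : 0 < r1) (hr2 : 0 < r2)
  (hXp : 0 < gp * P + pp) (hXm : 0 < gm * P + pm)
  (hK : (gp * P + pp) * r2 * (gm * (gm - 1) * Cm) = (gm * P + pm) * r1 * (gp * (gp - 1) * Cp))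
  (m1 : r1 * DA + a * D1 + a * r1 * th = 0)
  (m2 : - (r2 * DA) + b * D2 + b * r2 * th = 0)
  (tp : gm * (gm - 1) * Cm * (gp * DP * r2 + (gp * P + pp) * D2)
        = gp * (gp - 1) * Cp * (gm * DP * r1 + (gm * P + pm) * D1))
  (en : ((P + pp) / (gp - 1) - (P + pm) / (gm - 1)) * DA
        + (a / (gp - 1) + b / (gm - 1)) * DP
        + (a * (P + pp) / (gp - 1) + b * (P + pm) / (gm - 1) + P) * th = 0).

Let Xp := gp * P + pp.
Let Xm := gm * P + pm.
Let kp := gp - 1.
Let km := gm - 1.
Let cp := gp * kp * Cp.
Let cm := gm * km * Cm.
Let ra2 := a * Xp / kp + b * Xm / km.
Let M := ra2 * (a * gp / Xp + b * gm / Xm) - 1.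

Lemma kp_gt0 : 0 < kp. Proof. rewrite /kp. move: hgp; lra. Qed.
Lemma km_gt0 : 0 < km. Proof. rewrite /km; move: hgm; lra. Qed.

Lemma stepA : DA = a * b * DP * (gm / Xm - gp / Xp).
Proof.
have kp0 := kp_gt0; have km0 := km_gt0.
have gp0 : 0 < gp by move: hgp; lra.
have gm0 : 0 < gm by move: hgm; lra.
have cp0 : 0 < cp by rewrite /cp !mulr_gt0.
have cm0 : 0 < cm by rewrite /cm !mulr_gt0.
set K := cm * Xp * r2.
have EK : cm * Xp * r2 - cp * Xm * r1 = 0.
  by rewrite /cm /cp /Xp /Xm /km /kp; move: hK; lra.
have ET : cm * (gp * DP * r2 + Xp * D2) - cp * (gm * DP * r1 + Xm * D1) = 0.
  by rewrite /cm /cp /Xp /Xm /km /kp; move: tp; lra.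
have s1 : K * DA * (a + b) - a * b * DP * (cp * gm * r1 - cm * gp * r2)
   = a * b * (cm * (gp * DP * r2 + Xp * D2) - cp * (gm * DP * r1 + Xm * D1))
     - a * cm * Xp * (- (r2 * DA) + b * D2 + b * r2 * th)
     + b * cp * Xm * (r1 * DA + a * D1 + a * r1 * th)
     + b * DA * (cm * Xp * r2 - cp * Xm * r1) + a * b * th * (cm * Xp * r2 - cp * Xm * r1).
  by rewrite /K; ring.
rewrite ET m1 m2 EK hab !mulr0 mulr1 !subr0 addr0 !add0r in s1.
have K0 : 0 < K by rewrite /K !mulr_gt0.
have ->: DA = (a * b * DP * (cp * gm * r1 - cm * gp * r2)) / K.
  have h : K * DA = a * b * DP * (cp * gm * r1 - cm * gp * r2) by move: s1; lra.
  by rewrite -h; field; rewrite gt_eqF.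
have E1 : cp * r1 = K / Xm.
  have -> : K = cp * Xm * r1 by rewrite /K; move: EK; lra.
  by field; rewrite gt_eqF.
have -> : cp * gm * r1 = gm * (cp * r1) by ring.
rewrite E1 /K; field; rewrite !gt_eqF //.
Qed.

Lemma ra2_gt0 : 0 < ra2.
Proof.
have kp0 := kp_gt0; have km0 := km_gt0.
rewrite /ra2; have [a0|a0] := eqVneq a 0.
  have -> : b = 1 by move: hab; rewrite a0; lra.
  rewrite a0.
  by rewrite mul0r mul0r add0r mul1r divr_gt0.
apply: ltr_pwDl; first by rewrite !mulr_gt0 // ?invr_gt0 // lt_def a0.
by rewrite !mulr_ge0 // ?invr_ge0 ltW.
Qed.

Lemma M_gt0 : 0 < M.
Proof.
have kp0 := kp_gt0; have km0 := km_gt0.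
set N := gm * km * Xp ^+ 2 + gp * kp * Xm ^+ 2 - 2 * kp * km * Xp * Xm.
have -> : M = a ^+ 2 / kp + b ^+ 2 / km + a * b * N / (kp * km * Xp * Xm).
  rewrite /M /ra2 /N /kp /km; have -> : b = 1 - a by move: hab; lra.
  by field; rewrite !gt_eqF // ?subr_gt0.
have N0 : 0 <= N.
  have -> : N = (km * Xp - kp * Xm) ^+ 2 + (gm - km) * km * Xp ^+ 2 + (gp - kp) * kp * Xm ^+ 2
    by rewrite /N; ring.
  by rewrite !addr_ge0 ?sqr_ge0 // !mulr_ge0 ?sqr_ge0 ?ltW // /km /kp; lra.
apply: ltr_pwDl; last first.
  by rewrite divr_ge0 ?mulr_ge0 // ?ltW // !mulr_gt0.
have [a0|a0] := eqVneq a 0.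
  have -> : b = 1 by move: hab; rewrite a0; lra.
  rewrite a0.
  by rewrite expr0n /= mul0r add0r expr1n mul1r invr_gt0.
by apply: ltr_pwDl; [rewrite divr_gt0 // exprn_gt0 // lt_def a0 | rewrite divr_ge0 ?sqr_ge0 // ltW].
Qed.

Lemma stepB : DP * M = - (ra2 * th).
Proof.
have kp0 := kp_gt0; have km0 := km_gt0.
have e := en; rewrite stepA in e.
apply/eqP; rewrite -subr_eq0 opprK; apply/eqP; rewrite -e /M /ra2 /Xp /Xm /kp /km.
have -> : b = 1 - a by move: hab; lra.
by field; rewrite !gt_eqF // ?subr_gt0.
Qed.

Lemma mix_a2E : mix_rho_a2 gp gm pp pm (a - b) r1 r2 P = ra2.
Proof.
have kp0 := kp_gt0; have km0 := km_gt0.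
rewrite /mix_rho_a2 /sound2 /ra2 /Xp /Xm /kp /km.
have -> : b = 1 - a by move: hab; lra.
by field; rewrite !gt_eqF // ?subr_gt0.
Qed.

Lemma mix_cs2E : mix_rho_cs2 gp gm pp pm (a - b) r1 r2 P = ra2 / M.
Proof.
have kp0 := kp_gt0; have km0 := km_gt0.
have ra0 := ra2_gt0; have M0 := M_gt0.
rewrite /mix_rho_cs2 mix_a2E.
have -> : (1 + (a - b)) * gp / (2 * r1 * sound2 gp pp r1 P) +
    (1 - (a - b)) * gm / (2 * r2 * sound2 gm pm r2 P) - 1 / ra2 = M / ra2.
  rewrite /M /sound2 -/Xp -/Xm.
  have -> : b = 1 - a by move: hab; lra.
  by field; rewrite !gt_eqF.
by rewrite invf_div.
Qed.

Lemma concl1 : DP + mix_rho_cs2 gp gm pp pm (a - b) r1 r2 P * th = 0.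
Proof.
have M0 := M_gt0.
rewrite mix_cs2E.
have -> : DP = (DP * M) / M by field; rewrite gt_eqF.
by rewrite stepB; field; rewrite gt_eqF.
Qed.

Lemma concl2 : 2 * DA + (1 - (a - b) ^+ 2) * mix_delta gp gm pp pm (a - b) r1 r2 P * th = 0.
Proof.
have M0 := M_gt0; have ra0 := ra2_gt0.
have hb' : b = 1 - a by move: hab; lra.
rewrite /mix_delta mix_cs2E stepA.
have -> : DP = (DP * M) / M by field; rewrite gt_eqF.
rewrite stepB /sound2 -/Xp -/Xm hb'.
by rewrite /Xp /Xm; field; rewrite !gt_eqF.
Qed.

Lemma concl3 : a * r1 * (Cp * (gp * DP / Xp - gp * D1 / r1))
   + b * r2 * (Cm * (gm * DP / Xm - gm * D2 / r2)) = 0.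
Proof.
have kp0 := kp_gt0; have km0 := km_gt0.
have gp0 : 0 < gp by move: hgp; lra.
have gm0 : 0 < gm by move: hgm; lra.
have -> : a * r1 * (Cp * (gp * DP / Xp - gp * D1 / r1))
   + b * r2 * (Cm * (gm * DP / Xm - gm * D2 / r2))
   = Cp * gp * (a * r1 * DP / Xp - a * D1) + Cm * gm * (b * r2 * DP / Xm - b * D2).
  by field; rewrite !gt_eqF.
have -> : a * D1 = - (r1 * DA) - a * r1 * th by move: m1; lra.
have -> : b * D2 = r2 * DA - b * r2 * th by move: m2; lra.
have r2E : r2 = Xm * r1 * (gp * kp * Cp) / (Xp * (gm * km * Cm)).
  apply/eqP; rewrite eq_sym -subr_eq0; apply/eqP.
  rewrite /Xp /Xm /kp /km -hK; field; rewrite !gt_eqF // ?mulr_gt0 //.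
rewrite r2E.
have -> : 0 = (Cp * gp * (gp - 1) * r1 / Xp) * 0 by rewrite mulr0.
rewrite -en /Xp /Xm /kp /km.
have -> : b = 1 - a by move: hab; lra.
by field; rewrite !gt_eqF // ?mulr_gt0 // ?subr_gt0.
Qed.
End Alg.

Lemma alg_all (R : realType) (gp gm Cp Cm pp pm a b r1 r2 P DA D1 D2 DP th : R) :
  1 < gp -> 1 < gm -> 0 < Cp -> 0 < Cm -> 0 <= a -> 0 <= b -> a + b = 1 -> 0 < r1 -> 0 < r2 ->
  0 < gp * P + pp -> 0 < gm * P + pm ->
  (gp * P + pp) * r2 * (gm * (gm - 1) * Cm) = (gm * P + pm) * r1 * (gp * (gp - 1) * Cp) ->
  r1 * DA + a * D1 + a * r1 * th = 0 ->
  - (r2 * DA) + b * D2 + b * r2 * th = 0 ->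
  gm * (gm - 1) * Cm * (gp * DP * r2 + (gp * P + pp) * D2)
        = gp * (gp - 1) * Cp * (gm * DP * r1 + (gm * P + pm) * D1) ->
  ((P + pp) / (gp - 1) - (P + pm) / (gm - 1)) * DA
        + (a / (gp - 1) + b / (gm - 1)) * DP
        + (a * (P + pp) / (gp - 1) + b * (P + pm) / (gm - 1) + P) * th = 0 ->
  [/\ DP + mix_rho_cs2 gp gm pp pm (a - b) r1 r2 P * th = 0,
      2 * DA + (1 - (a - b) ^+ 2) * mix_delta gp gm pp pm (a - b) r1 r2 P * th = 0 &
      a * r1 * (Cp * (gp * DP / (gp * P + pp) - gp * D1 / r1))
   + b * r2 * (Cm * (gm * DP / (gm * P + pm) - gm * D2 / r2)) = 0].
Proof.
move=> *; split; first by apply: (@concl1 R gp gm Cp Cm pp pm a b r1 r2 P DA D1 D2 DP th).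
  by apply: (@concl2 R gp gm Cp Cm pp pm a b r1 r2 P DA D1 D2 DP th).
by apply: (@concl3 R gp gm Cp Cm pp pm a b r1 r2 P DA D1 D2 DP th).
Qed.

Unset Implicit Arguments. Set Strict Implicit.

Theorem mainTheorem1 (R : realType) (d : nat)
  (gp gm Cvp Cvm pip pim s0p s0m : R) (g : 'I_d -> R)
  (ap am rp rm rho p e ep em : R -> 'rV[R]_d -> R)
  (u : 'I_d -> R -> 'rV[R]_d -> R) :
  1 < gp -> 1 < gm -> 0 < Cvp -> 0 < Cvm -> 0 <= pip -> 0 <= pim ->
  (* volume fractions, densities, energy *)
  (forall t x, 0 <= ap t x <= 1 /\ 0 <= am t x <= 1 /\ ap t x + am t x = 1) ->
  (forall t x, 0 < rp t x /\ 0 < rm t x /\ 0 < e t x) ->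
  (forall t x, rho t x = ap t x * rp t x + am t x * rm t x) ->
  (* mixture equation of state (pressure/temperature equilibrium) *)
  (forall t x,
     (1 + (ap t x - am t x)) * rp t x + (1 - (ap t x - am t x)) * rm t x
       = 2 * rho t x /\
     (1 + (ap t x - am t x)) * rp t x * ep t x
       + (1 - (ap t x - am t x)) * rm t x * em t x = 2 * rho t x * e t x /\
     sg_pressure gp pip (rp t x) (ep t x) = p t x /\
     sg_pressure gm pim (rm t x) (em t x) = p t x /\
     sg_temperature gp Cvp pip (rp t x) (ep t x)
       = sg_temperature gm Cvm pim (rm t x) (em t x) /\
     0 < sg_temperature gp Cvp pip (rp t x) (ep t x)) ->
  (* classical (differentiable) solution *)
  partial_derivable ap -> partial_derivable am ->
  partial_derivable rp -> partial_derivable rm ->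
  partial_derivable p -> partial_derivable e ->
  (forall i, partial_derivable (u i)) ->
  (* the homogeneous two-fluid model *)
  (forall t x,
     dt (fun t x => ap t x * rp t x) t x
     + \sum_i dx i (fun t x => ap t x * rp t x * u i t x) t x = 0) ->
  (forall t x,
     dt (fun t x => am t x * rm t x) t x
     + \sum_i dx i (fun t x => am t x * rm t x * u i t x) t x = 0) ->
  (forall j t x,
     dt (fun t x => rho t x * u j t x) t x
     + \sum_i dx i (fun t x => rho t x * u j t x * u i t x
                               + (if i == j then p t x else 0)) t x
     = rho t x * g j) ->
  (forall t x,
     dt (fun t x => rho t x * (e t x + (1 / 2) * \sum_k u k t x ^+ 2)) t x
     + \sum_i dx i (fun t x =>
          (rho t x * (e t x + (1 / 2) * \sum_k u k t x ^+ 2) + p t x) * u i t x) t x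
     = rho t x * \sum_k g k * u k t x) ->
  (* conclusion: the primitive form *)
  (forall j t x,
     dt (u j) t x + advect u (u j) t x + (1 / rho t x) * dx j p t x = g j) /\
  (forall t x,
     dt p t x + advect u p t x
     + mix_rho_cs2 gp gm pip pim (ap t x - am t x) (rp t x) (rm t x) (p t x)
       * divergence u t x = 0) /\
  (forall t x,
     dt (fun t x => ap t x - am t x) t x + advect u (fun t x => ap t x - am t x) t x
     + (1 - (ap t x - am t x) ^+ 2)
       * mix_delta gp gm pip pim (ap t x - am t x) (rp t x) (rm t x) (p t x)
       * divergence u t x = 0) /\
  (let s := fun t x =>
       ((1 + (ap t x - am t x)) * rp t x * sg_entropy gp Cvp pip s0p (rp t x) (ep t x)
        + (1 - (ap t x - am t x)) * rm t x * sg_entropy gm Cvm pim s0m (rm t x) (em t x))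
       / (2 * rho t x) in
   forall t x, dt s t x + advect u s t x = 0).
Proof.
move=> hgp hgm hCp hCm hpip hpim Hfrac Hpos Hrho Heos Dap Dam Drp Drm Dp De Du Mp Mm Mom En.
have kp0 : 0 < gp - 1 by rewrite subr_gt0.
have km0 : 0 < gm - 1 by rewrite subr_gt0.
have gp0 : 0 < gp by move: hgp; lra.
have gm0 : 0 < gm by move: hgm; lra.
have rp0 t x : 0 < rp t x by case: (Hpos t x).
have rm0 t x : 0 < rm t x by case: (Hpos t x) => _ [].
have ab t x : ap t x + am t x = 1 by case: (Hfrac t x) => _ [].
have ap0 t x : 0 <= ap t x by case: (Hfrac t x) => /andP [].
have am0 t x : 0 <= am t x by case: (Hfrac t x) => _ [/andP []].
have rho0 t x : 0 < rho t x.
  rewrite Hrho; have [a0|a0] := eqVneq (ap t x) 0.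
    have -> : am t x = 1 by move: (ab t x); rewrite a0; lra.
    by rewrite a0 mul0r add0r mul1r.
  apply: ltr_pwDl; last by rewrite mulr_ge0 // ltW.
  by rewrite mulr_gt0 // lt_def a0 ap0.
have epE t x : ep t x = (p t x + pip) / ((gp - 1) * rp t x).
  case: (Heos t x) => _ [_ [h _]]; rewrite -h /sg_pressure.
  by field; rewrite !gt_eqF.
have emE t x : em t x = (p t x + pim) / ((gm - 1) * rm t x).
  case: (Heos t x) => _ [_ [_ [h _]]]; rewrite -h /sg_pressure.
  by field; rewrite !gt_eqF.
have TpE t x : sg_temperature gp Cvp pip (rp t x) (ep t x)
   = (gp * p t x + pip) / (gp * (gp - 1) * Cvp * rp t x).
  by rewrite /sg_temperature epE; field; rewrite !gt_eqF.
have TmE t x : sg_temperature gm Cvm pim (rm t x) (em t x)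
   = (gm * p t x + pim) / (gm * (gm - 1) * Cvm * rm t x).
  by rewrite /sg_temperature emE; field; rewrite !gt_eqF.
have Xp0 t x : 0 < gp * p t x + pip.
  case: (Heos t x) => _ [_ [_ [_ [_ h]]]]; move: h; rewrite TpE => h.
  have -> : gp * p t x + pip = (gp * p t x + pip) / (gp * (gp - 1) * Cvp * rp t x)
     * (gp * (gp - 1) * Cvp * rp t x) by field; rewrite !gt_eqF.
  by rewrite mulr_gt0 // !mulr_gt0.
have Xm0 t x : 0 < gm * p t x + pim.
  case: (Heos t x) => _ [_ [_ [_ [hT h]]]]; move: h; rewrite hT TmE => h.
  have -> : gm * p t x + pim = (gm * p t x + pim) / (gm * (gm - 1) * Cvm * rm t x)
     * (gm * (gm - 1) * Cvm * rm t x) by field; rewrite !gt_eqF.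
  by rewrite mulr_gt0 // !mulr_gt0.
have Tc t x : (gp * p t x + pip) * rm t x * (gm * (gm - 1) * Cvm)
    = (gm * p t x + pim) * rp t x * (gp * (gp - 1) * Cvp).
  case: (Heos t x) => _ [_ [_ [_ [hT _]]]]; move: hT; rewrite TpE TmE => hT.
  have E1 : gp * p t x + pip = (gm * p t x + pim) / (gm * (gm - 1) * Cvm * rm t x)
     * (gp * (gp - 1) * Cvp * rp t x).
    by rewrite -hT; field; rewrite !gt_eqF // !mulr_gt0.
  by rewrite E1; field; rewrite !gt_eqF // !mulr_gt0.
have eW t x : rho t x * e t x = ap t x * ((gp - 1)^-1 * p t x + pip / (gp - 1))
    + am t x * ((gm - 1)^-1 * p t x + pim / (gm - 1)).
  case: (Heos t x) => _ [h _]; move: h; rewrite epE emE.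
  have -> : 1 + (ap t x - am t x) = 2 * ap t x by move: (ab t x); lra.
  have -> : 1 - (ap t x - am t x) = 2 * am t x by move: (ab t x); lra.
  move=> h; apply: (@mulfI _ 2); first by [].
  rewrite mulrA -h; field; rewrite !gt_eqF //.
have rhoE : rho = (fun t x => ap t x * rp t x + am t x * rm t x).
  by apply/funext => t; apply/funext => x; exact: Hrho.
have Drho_ : partial_derivable rho by rewrite rhoE; apply: pdvD; apply: pdvM.
have DmB t x : Dm u am t x = - Dm u ap t x.
  have h : Dm u (fun t x => ap t x + am t x) t x = 0.
    have -> : (fun t x => ap t x + am t x) = (fun _ _ => 1).
      by apply/funext => a; apply/funext => b; exact: ab.
    exact: DmC.
  by rewrite DmD // in h; move: h; lra.
have m1 t x : rp t x * Dm u ap t x + ap t x * Dm u rp t x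
    + ap t x * rp t x * divergence u t x = 0.
  have h := consE t x (pdvM Dap Drp) Du.
  rewrite DmM // in h; rewrite -(Mp t x) h; ring.
have m2 t x : - (rm t x * Dm u ap t x) + am t x * Dm u rm t x
    + am t x * rm t x * divergence u t x = 0.
  have h := consE t x (pdvM Dam Drm) Du.
  rewrite DmM // DmB in h; rewrite -(Mm t x) h; ring.
have Dmrho t x : Dm u rho t x = - (rho t x * divergence u t x).
  rewrite {1}rhoE (DmD u t x (pdvM Dap Drp) (pdvM Dam Drm)) (DmM u t x Dap Drp) (DmM u t x Dam Drm) DmB Hrho.
  have h1 := m1 t x; have h2 := m2 t x.
  apply/eqP; rewrite -subr_eq0; apply/eqP; rewrite -[RHS](addr0 0).
  rewrite -{1}h1 -h2; ring.
have mom j t x : rho t x * Dm u (u j) t x + dx j p t x = rho t x * g j.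
  rewrite -(Mom j t x).
  have Hs : \sum_i dx i (fun t x => rho t x * u j t x * u i t x
        + (if i == j then p t x else 0)) t x
      = \sum_i (dx i (fun t x => rho t x * u j t x * u i t x) t x
      + (if i == j then dx i p t x else 0)).
    apply: eq_bigr => i _.
    exact: (@dx_ite R d j i (fun t x => rho t x * u j t x * u i t x) p t x
      (@pdvM R d (fun t x => rho t x * u j t x) (u i) (pdvM Drho_ (Du j)) (Du i)) Dp).
  rewrite Hs.
  rewrite big_split /= -big_mkcond big_pred1_eq addrA.
  have h := consE t x (pdvM Drho_ (Du j)) Du; cbv beta in h.
  rewrite h (DmM u t x Drho_ (Du j)) Dmrho /divergence; ring.
have sqE k : (fun t x => u k t x ^+ 2) = (fun t x => u k t x * u k t x).
  by apply/funext => a; apply/funext => b; rewrite expr2.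
have pdsq k : partial_derivable (fun t x => u k t x ^+ 2) by rewrite sqE; exact: (@pdvM R d (u k) (u k) (Du k) (Du k)).
have pdQ : partial_derivable (fun t x => \sum_k u k t x ^+ 2).
  exact: (pdvS (F := fun k t x => u k t x ^+ 2) pdsq).
have DQ t x : rho t x * Dm u (fun t x => \sum_k u k t x ^+ 2) t x
    = 2 * (rho t x * \sum_k g k * u k t x) - 2 * advect u p t x.
  rewrite (DmS (F := fun k t x => u k t x ^+ 2) u t x pdsq) /advect [LHS]mulr_sumr.
  rewrite [LHS](eq_bigr (fun k => 2 * (rho t x * (g k * u k t x)) - 2 * (u k t x * dx k p t x))); last first.
    move=> k _; rewrite sqE (DmM u t x (Du k) (Du k)).
    have h := mom k t x.
    have -> : rho t x * (u k t x * Dm u (u k) t x + u k t x * Dm u (u k) t x)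
      = 2 * u k t x * (rho t x * Dm u (u k) t x) by ring.
    have -> : rho t x * Dm u (u k) t x = rho t x * g k - dx k p t x by rewrite -h; ring.
    ring.
  rewrite sumrB; congr (_ - _); rewrite -mulr_sumr; congr (_ * _).
  by rewrite mulr_sumr.
have pdE2 : partial_derivable (fun t x => e t x + 1 / 2 * \sum_k u k t x ^+ 2).
  exact: (@pdvD R d e (fun t x => 1 / 2 * \sum_k u k t x ^+ 2) De
     (@pdvM R d (fun _ _ => 1 / 2) (fun t x => \sum_k u k t x ^+ 2) (pdvC (1 / 2)) pdQ)).
have pdFE : partial_derivable (fun t x => rho t x * (e t x + 1 / 2 * \sum_k u k t x ^+ 2)).
  exact: (@pdvM R d rho (fun t x => e t x + 1 / 2 * \sum_k u k t x ^+ 2) Drho_ pdE2).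
have enr t x : rho t x * Dm u e t x + p t x * divergence u t x = 0.
  have h := consE t x (@pdvD R d (fun t x => rho t x * (e t x + 1 / 2 * \sum_k u k t x ^+ 2)) p pdFE Dp) Du.
  cbv beta in h.
  have h2 := dtD t x pdFE Dp; cbv beta in h2; rewrite h2 in h.
  have E1 := DmD u t x pdFE Dp; cbv beta in E1.
  have E2 := DmM u t x Drho_ pdE2; cbv beta in E2.
  have E3 := DmD u t x De (@pdvM R d (fun _ _ => 1 / 2) (fun t x => \sum_k u k t x ^+ 2) (pdvC (1 / 2)) pdQ).
  cbv beta in E3.
  have E4 := @DmM R d u (fun _ _ => 1 / 2) (fun t x => \sum_k u k t x ^+ 2) t x (pdvC (1 / 2)) pdQ.
  cbv beta in E4; rewrite DmC in E4.
  have Dp_ : Dm u p t x = dt p t x + advect u p t x by [].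
  have H3 := DQ t x; have H4 := Dmrho t x; have H5 := En t x.
  set A := dt _ t x in h H5.
  set B := \sum_i _ in h H5.
  set Q := \sum_k u k t x ^+ 2 in E2 E4 H3 h.
  set DQ' := Dm u (fun t x => \sum_k u k t x ^+ 2) t x in E4 H3.
  rewrite E1 E2 E3 E4 H4 Dp_ in h.
  move: h H5 H3; clear -R; move=> h H5 H3.
  lra.
have pdL1 : partial_derivable (fun t x => (gp - 1)^-1 * p t x + pip / (gp - 1)).
  exact: (@pdvD R d (fun t x => (gp - 1)^-1 * p t x) (fun _ _ => pip / (gp - 1))
     (@pdvM R d (fun _ _ => (gp - 1)^-1) p (pdvC _) Dp) (pdvC _)).
have pdL2 : partial_derivable (fun t x => (gm - 1)^-1 * p t x + pim / (gm - 1)).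
  exact: (@pdvD R d (fun t x => (gm - 1)^-1 * p t x) (fun _ _ => pim / (gm - 1))
     (@pdvM R d (fun _ _ => (gm - 1)^-1) p (pdvC _) Dp) (pdvC _)).
have en t x : ((p t x + pip) / (gp - 1) - (p t x + pim) / (gm - 1)) * Dm u ap t x
        + (ap t x / (gp - 1) + am t x / (gm - 1)) * Dm u p t x
        + (ap t x * (p t x + pip) / (gp - 1) + am t x * (p t x + pim) / (gm - 1) + p t x)
          * divergence u t x = 0.
  have hW : (fun t x => rho t x * e t x) = (fun t x => ap t x * ((gp - 1)^-1 * p t x + pip / (gp - 1))
    + am t x * ((gm - 1)^-1 * p t x + pim / (gm - 1))).
    by apply/funext => a; apply/funext => b; exact: eW.
  have h1 := DmM u t x Drho_ De.
  rewrite hW in h1.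
  have h2 := DmD u t x (@pdvM R d ap _ Dap pdL1) (@pdvM R d am _ Dam pdL2).
  cbv beta in h2; rewrite h2 in h1.
  have h3 := DmM u t x Dap pdL1; cbv beta in h3; rewrite h3 in h1.
  have h4 := DmM u t x Dam pdL2; cbv beta in h4; rewrite h4 in h1.
  have h5 := DmD u t x (@pdvM R d (fun _ _ => (gp - 1)^-1) p (pdvC _) Dp) (pdvC (pip / (gp - 1))).
  cbv beta in h5; rewrite h5 in h1.
  have h6 := DmD u t x (@pdvM R d (fun _ _ => (gm - 1)^-1) p (pdvC _) Dp) (pdvC (pim / (gm - 1))).
  cbv beta in h6; rewrite h6 in h1.
  have h7 := @DmM R d u (fun _ _ => (gp - 1)^-1) p t x (pdvC _) Dp.
  have h8 := @DmM R d u (fun _ _ => (gm - 1)^-1) p t x (pdvC _) Dp.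
  cbv beta in h7; cbv beta in h8; rewrite h7 h8 !DmC DmB (Dmrho t x) in h1.
  have h9 := enr t x; have h10 := eW t x.
  have h11 : rho t x * e t x * divergence u t x = (ap t x * ((gp - 1)^-1 * p t x + pip / (gp - 1)) +
    am t x * ((gm - 1)^-1 * p t x + pim / (gm - 1))) * divergence u t x by rewrite h10.
  move: h1 h9 h11; clear -R; move=> h1 h9 h11.
  rewrite !mulr0 !addr0 in h1.
  lra.
have DmX (gam pi c : R) (r : R -> 'rV[R]_d -> R) (Hr : partial_derivable r) t x :
    Dm u (fun t x => (gam * p t x + pi) * r t x * c) t x
    = c * (gam * Dm u p t x * r t x + (gam * p t x + pi) * Dm u r t x).
  have pX : partial_derivable (fun t x => gam * p t x + pi).
    exact: (@pdvD R d (fun t x => gam * p t x) (fun _ _ => pi)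
       (@pdvM R d (fun _ _ => gam) p (pdvC _) Dp) (pdvC _)).
  have h1 := @DmM R d u (fun t x => (gam * p t x + pi) * r t x) (fun _ _ => c) t x
     (@pdvM R d (fun t x => gam * p t x + pi) r pX Hr) (pdvC _).
  cbv beta in h1; rewrite h1 DmC.
  have h2 := DmM u t x pX Hr; cbv beta in h2; rewrite h2.
  have h3 := DmD u t x (@pdvM R d (fun _ _ => gam) p (pdvC _) Dp) (pdvC pi).
  cbv beta in h3; rewrite h3 DmC.
  have h4 := @DmM R d u (fun _ _ => gam) p t x (pdvC _) Dp.
  cbv beta in h4; rewrite h4 DmC; ring.
have tp t x : gm * (gm - 1) * Cvm * (gp * Dm u p t x * rm t x + (gp * p t x + pip) * Dm u rm t x)
        = gp * (gp - 1) * Cvp * (gm * Dm u p t x * rp t x + (gm * p t x + pim) * Dm u rp t x).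
  have hT : (fun t x => (gp * p t x + pip) * rm t x * (gm * (gm - 1) * Cvm))
      = (fun t x => (gm * p t x + pim) * rp t x * (gp * (gp - 1) * Cvp)).
    by apply/funext => a; apply/funext => b; exact: Tc.
  have := DmX gp pip (gm * (gm - 1) * Cvm) rm Drm t x.
  by rewrite hT DmX.
have alg t x := alg_all hgp hgm hCp hCm (ap0 t x) (am0 t x) (ab t x) (rp0 t x) (rm0 t x)
   (Xp0 t x) (Xm0 t x) (Tc t x) (m1 t x) (m2 t x) (tp t x) (en t x).
split.
  move=> j t x; have h := mom j t x; rewrite /Dm in h.
  have r0 : rho t x != 0 by rewrite gt_eqF.
  have -> : g j = (rho t x * g j) / rho t x by field.
  rewrite -h; field; exact: r0.
split.
  by move=> t x; case: (alg t x).
split.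
  move=> t x; case: (alg t x) => _ h _.
  have hA : (fun t x => ap t x - am t x) = (fun t x => ap t x + (fun _ _ => -1) t x * am t x).
    by apply/funext => a; apply/funext => b; rewrite mulN1r.
  have h1 := DmD u t x Dap (@pdvM R d (fun _ _ => -1) am (pdvC _) Dam).
  have h2 := @DmM R d u (fun _ _ => -1) am t x (pdvC _) Dam.
  cbv beta in h1; cbv beta in h2.
  have : Dm u (fun t x => ap t x - am t x) t x = 2 * Dm u ap t x.
    by rewrite hA h1 h2 DmC DmB; ring.
  rewrite /Dm => ->; exact: h.
have Sp t x : sg_entropy gp Cvp pip s0p (rp t x) (ep t x)
    = Cvp * ln (gp * p t x + pip) + (- (Cvp * gp)) * ln (rp t x)
      + (s0p - Cvp * ln (gp * (gp - 1) * Cvp)).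
  have c0 : 0 < gp * (gp - 1) * Cvp by rewrite !mulr_gt0.
  rewrite /sg_entropy TpE ln_div ?posrE ?mulr_gt0 // lnM ?posrE //.
  ring.
have Sm t x : sg_entropy gm Cvm pim s0m (rm t x) (em t x)
    = Cvm * ln (gm * p t x + pim) + (- (Cvm * gm)) * ln (rm t x)
      + (s0m - Cvm * ln (gm * (gm - 1) * Cvm)).
  have c0 : 0 < gm * (gm - 1) * Cvm by rewrite !mulr_gt0.
  rewrite /sg_entropy TmE ln_div ?posrE ?mulr_gt0 // lnM ?posrE //.
  ring.
set K1 := s0p - Cvp * ln (gp * (gp - 1) * Cvp).
set K2 := s0m - Cvm * ln (gm * (gm - 1) * Cvm).
pose S1 := fun t x => Cvp * ln (gp * p t x + pip) + (- (Cvp * gp)) * ln (rp t x) + K1.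
pose S2 := fun t x => Cvm * ln (gm * p t x + pim) + (- (Cvm * gm)) * ln (rm t x) + K2.
have pXp : partial_derivable (fun t x => gp * p t x + pip).
  exact: (@pdvD R d (fun t x => gp * p t x) (fun _ _ => pip)
     (@pdvM R d (fun _ _ => gp) p (pdvC _) Dp) (pdvC _)).
have pXm : partial_derivable (fun t x => gm * p t x + pim).
  exact: (@pdvD R d (fun t x => gm * p t x) (fun _ _ => pim)
     (@pdvM R d (fun _ _ => gm) p (pdvC _) Dp) (pdvC _)).
have DmXp t x : Dm u (fun t x => gp * p t x + pip) t x = gp * Dm u p t x.
  have h3 := DmD u t x (@pdvM R d (fun _ _ => gp) p (pdvC _) Dp) (pdvC pip).
  have h4 := @DmM R d u (fun _ _ => gp) p t x (pdvC _) Dp.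
  cbv beta in h3; cbv beta in h4; rewrite h3 h4 !DmC; ring.
have DmXm t x : Dm u (fun t x => gm * p t x + pim) t x = gm * Dm u p t x.
  have h3 := DmD u t x (@pdvM R d (fun _ _ => gm) p (pdvC _) Dp) (pdvC pim).
  have h4 := @DmM R d u (fun _ _ => gm) p t x (pdvC _) Dp.
  cbv beta in h3; cbv beta in h4; rewrite h3 h4 !DmC; ring.
have pS (c1 c2 K : R) (X r : R -> 'rV[R]_d -> R) (pX : partial_derivable X) (pr : partial_derivable r)
    (X0 : forall t x, 0 < X t x) (r0 : forall t x, 0 < r t x) :
    partial_derivable (fun t x => c1 * ln (X t x) + c2 * ln (r t x) + K) /\
    forall t x, Dm u (fun t x => c1 * ln (X t x) + c2 * ln (r t x) + K) t x
      = c1 * (Dm u X t x / X t x) + c2 * (Dm u r t x / r t x).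
  have l1 := pdvln X0 pX; have l2 := pdvln r0 pr.
  have q1 := @pdvM R d (fun _ _ => c1) (fun t x => ln (X t x)) (pdvC _) l1.
  have q2 := @pdvM R d (fun _ _ => c2) (fun t x => ln (r t x)) (pdvC _) l2.
  have q3 := @pdvD R d _ _ q1 q2.
  split; first exact: (@pdvD R d _ (fun _ _ => K) q3 (pdvC _)).
  move=> t x.
  have h1 := DmD u t x q3 (pdvC K); cbv beta in h1; rewrite h1 DmC addr0.
  have h2 := DmD u t x q1 q2; cbv beta in h2; rewrite h2.
  have h3 := DmM u t x (pdvC c1) l1; cbv beta in h3; rewrite h3.
  have h4 := DmM u t x (pdvC c2) l2; cbv beta in h4; rewrite h4 !DmC.
  rewrite (Dmln u t x X0 pX) (Dmln u t x r0 pr); ring.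
have [pS1 DS1] := pS Cvp (- (Cvp * gp)) K1 _ _ pXp Drp Xp0 rp0.
have [pS2 DS2] := pS Cvm (- (Cvm * gm)) K2 _ _ pXm Drm Xm0 rm0.
pose Nf := fun t x => ap t x * rp t x * S1 t x + am t x * rm t x * S2 t x.
have pN : partial_derivable Nf.
  exact: (@pdvD R d _ _ (@pdvM R d _ S1 (pdvM Dap Drp) pS1) (@pdvM R d _ S2 (pdvM Dam Drm) pS2)).
move=> s t x.
have key : Dm u Nf t x + Nf t x * divergence u t x = 0.
  have h1 := DmD u t x (@pdvM R d _ S1 (pdvM Dap Drp) pS1) (@pdvM R d _ S2 (pdvM Dam Drm) pS2).
  cbv beta in h1; rewrite /Nf h1.
  have h2 := DmM u t x (pdvM Dap Drp) pS1; cbv beta in h2; rewrite h2.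
  have h3 := DmM u t x (pdvM Dam Drm) pS2; cbv beta in h3; rewrite h3.
  rewrite (DmM u t x Dap Drp) (DmM u t x Dam Drm) DmB.
  rewrite /S1 /S2 DS1 DS2 DmXp DmXm.
  case: (alg t x) => _ _ c3.
  have hm1 := m1 t x; have hm2 := m2 t x.
  set S1v := Cvp * ln (gp * p t x + pip) + - (Cvp * gp) * ln (rp t x) + K1.
  set S2v := Cvm * ln (gm * p t x + pim) + - (Cvm * gm) * ln (rm t x) + K2.
  have h5 : S1v * (rp t x * Dm u ap t x + ap t x * Dm u rp t x +
    ap t x * rp t x * divergence u t x) = 0 by rewrite hm1 mulr0.
  have h6 : S2v * (- (rm t x * Dm u ap t x) + am t x * Dm u rm t x +
    am t x * rm t x * divergence u t x) = 0 by rewrite hm2 mulr0.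
  move: c3 h5 h6; clear; move=> c3 h5 h6.
  lra.
have sE : s = (fun t x => Nf t x * (rho t x)^-1).
  apply/funext => a; apply/funext => b.
  rewrite /s /Nf /S1 /S2 Sp Sm -/K1 -/K2.
  have -> : 1 + (ap a b - am a b) = 2 * ap a b by move: (ab a b); lra.
  have -> : 1 - (ap a b - am a b) = 2 * am a b by move: (ab a b); lra.
  by field; rewrite gt_eqF.
change (Dm u s t x = 0); rewrite sE.
have rn : forall t x, rho t x != 0 by move=> ? ?; rewrite gt_eqF.
have h1 := DmM u t x pN (pdvV rn Drho_); cbv beta in h1.
rewrite h1 (DmV u t x rn Drho_) (Dmrho t x).
have -> : Nf t x * (- - (rho t x * divergence u t x) / rho t x ^+ 2) + (rho t x)^-1 * Dm u Nf t x
   = (Dm u Nf t x + Nf t x * divergence u t x) / rho t x by field; exact: rn.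
by rewrite key mul0r.
Qed.
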